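(* Let $(S,K,I)$ be a split graph. If the factor graph $\Phi(S)$ is connected, then its diameter is at most $\lceil(\deg(S)+1)/2\rceil$.
   Context: A split graph $(S,K,I)$ is a graph $S$ together with a fixed partition $V(S)=K\dot\cup I$, where $K$ is a clique and $I$ is an independent set. For a vertex $v$ of $S$, $N_v$ denotes its open neighborhood in $S$ and $d_v=|N_v|$; $\eta_{uv}=|N_u\cap N_v|$. A 2-switch in $S$ replaces edges $ab,cd$ with $ac,bd$ when $ab,cd\in E(S)$ and $ac,bd\notin E(S)$. The factor graph $\Phi(S)$ is the loopless multigraph with vertex set $I$ in which, for distinct $u,v\in I$, there is one edge joining $u$ and $v$ for each 2-switch of $S$ acting on $u$ and $v$; equivalently, the multiplicity of $uv$ is $\sigma_{uv}=(d_u-\eta_{uv})(d_v-\eta_{uv})$. The 2-switch-degree $\deg(S)$ is the number of 2-switches acting on $S$, which equals the number of edges of $\Phi(S)$ counted with multiplicity, i.e. $\sum_{\{u,v\}\subseteq I}\sigma_{uv}$. Distances (and hence the diameter) in $\Phi(S)$ are measured ignoring edge multiplicities, i.e. as in the underlying simple graph. *)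

(* Defs.v *)
From mathcomp Require Import all_boot.
Set Implicit Arguments. Unset Strict Implicit. Unset Printing Implicit Defensive.

Section SplitGraph.
Variables (T : finType) (e : rel T).

Definition simple_graph : Prop := symmetric e /\ irreflexive e.

Definition split_graph (K I : {set T}) : Prop :=
  [/\ simple_graph, K :|: I = setT, K :&: I = set0,
      {in K &, forall u v, u != v -> e u v} &
      {in I &, forall u v, ~~ e u v}].

Definition nbhd (v : T) : {set T} := [set w | e v w].
Definition dg (v : T) : nat := #|nbhd v|.
Definition eta (u v : T) : nat := #|nbhd u :&: nbhd v|.

(* multiplicity of the edge uv in the factor graph *)
Definition sigma (u v : T) : nat := (dg u - eta u v) * (dg v - eta u v).

(* 2-switch-degree: sum of sigma over unordered pairs {u,v} of I *)
Definition switch_deg (I : {set T}) : nat :=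
  \sum_(u in I) \sum_(v in I | enum_rank u < enum_rank v) sigma u v.

(* adjacency of the underlying simple graph of Phi(S) (vertex set I) *)
Definition phi_adj (I : {set T}) : rel T :=
  fun u v => [&& u \in I, v \in I, u != v & 0 < sigma u v].

Definition phi_connected (I : {set T}) : Prop :=
  {in I &, forall u v, connect (phi_adj I) u v}.

Fixpoint ball (I : {set T}) (n : nat) (u : T) : {set T} :=
  match n with
  | 0 => [set u]
  | n'.+1 => ball I n' u :|:
             [set y | [exists x in ball I n' u, phi_adj I x y]]
  end.

(* distance in Phi(S) (ignoring multiplicities): least k with v in ball k u;
   equals #|T|.+1 if no such k <= #|T| exists (never happens if connected) *)
Definition phi_dist (I : {set T}) (u v : T) : nat :=
  find (fun k => v \in ball I k u) (iota 0 #|T|.+1).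

Definition phi_diameter (I : {set T}) : nat :=
  \max_(u in I) \max_(v in I) phi_dist I u v.

End SplitGraph.

(* Main.v *)
Require Import Defs.
From mathcomp Require Import all_boot zify.
Set Implicit Arguments. Unset Strict Implicit. Unset Printing Implicit Defensive.

Lemma four_sets (T : finType) (W X Y Z : {set T}) :
  ~~ (W \subset X) -> ~~ (X \subset W) ->
  ~~ (X \subset Y) -> ~~ (Y \subset X) ->
  ~~ (Y \subset Z) -> ~~ (Z \subset Y) ->
  (W \subset Y) || (Y \subset W) ->
  (X \subset Z) || (Z \subset X) ->
  (W \subset Z) || (Z \subset W) ->
  #|X :\: Y| = 1 -> #|Y :\: X| = 1 -> False.
Proof.
move=> nWX nXW nXY nYX nYZ nZY cWY cXZ cWZ /eqP/cards1P [a Ha] /eqP/cards1P [b Hb].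
have inA : forall p, p \in X -> p \notin Y -> p = a.
  by move=> p pX pY; apply/set1P; rewrite -Ha inE pX pY.
have inB : forall p, p \in Y -> p \notin X -> p = b.
  by move=> p pY pX; apply/set1P; rewrite -Hb inE pX pY.
case/orP: cWY => [sWY|sYW]; case/orP: cXZ => [sXZ|sZX].
- have bW : b \in W.
    have [p pW pX] := subsetPn nWX.
    by rewrite -(inB p) // (subsetP sWY).
  have bZ : b \notin Z.
    have [q qY qZ] := subsetPn nYZ.
    have qX : q \notin X by apply: contra qZ; apply: (subsetP sXZ).
    by rewrite -(inB q).
  have nWZ : ~~ (W \subset Z) by apply/subsetPn; exists b.
  rewrite (negbTE nWZ) /= in cWZ.
  by rewrite (subset_trans cWZ sWY) in nZY.
- have nWZ : ~~ (W \subset Z) by apply: contra nWX => h; exact: subset_trans h sZX.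
  rewrite (negbTE nWZ) /= in cWZ.
  by rewrite (subset_trans cWZ sWY) in nZY.
- have nZW : ~~ (Z \subset W) by apply: contra nXW => h; exact: subset_trans sXZ h.
  rewrite (negbTE nZW) orbF in cWZ.
  by rewrite (subset_trans sYW cWZ) in nYZ.
- have aZ : a \in Z.
    have [p pZ pY] := subsetPn nZY.
    by rewrite -(inA p) // (subsetP sZX).
  have aW : a \notin W.
    have [q qX qW] := subsetPn nXW.
    have qY : q \notin Y by apply: contra qW; apply: (subsetP sYW).
    by rewrite -(inA q).
  have nZW : ~~ (Z \subset W) by apply/subsetPn; exists a.
  rewrite (negbTE nZW) orbF in cWZ.
  by rewrite (subset_trans cWZ sZX) in nWX.
Qed.

Lemma sigmaE (T : finType) (e : rel T) u v :
  sigma e u v = #|nbhd e u :\: nbhd e v| * #|nbhd e v :\: nbhd e u|.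
Proof. by rewrite /sigma /eta /dg !cardsD setIC. Qed.

Lemma sigmaC (T : finType) (e : rel T) u v : sigma e u v = sigma e v u.
Proof. by rewrite !sigmaE mulnC. Qed.

Lemma sigma_eq0 (T : finType) (e : rel T) u v :
  (sigma e u v == 0) = (nbhd e u \subset nbhd e v) || (nbhd e v \subset nbhd e u).
Proof. by rewrite sigmaE muln_eq0 !cards_eq0 !setD_eq0. Qed.

Lemma phi_adjC (T : finType) (e : rel T) (I : {set T}) x y :
  phi_adj e I x y = phi_adj e I y x.
Proof. by rewrite /phi_adj sigmaC eq_sym andbCA (andbC (x \in I)) andbA. Qed.

Lemma ball_mono (T : finType) (e : rel T) (I : {set T}) u i j :
  i <= j -> ball e I i u \subset ball e I j u.
Proof.
move=> /subnK <-; elim: (j - i) => [|k IH] //.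
by rewrite addSn /=; apply: subset_trans IH _; rewrite subsetUl.
Qed.

Lemma ball_adj (T : finType) (e : rel T) (I : {set T}) u i x y :
  x \in ball e I i u -> phi_adj e I x y -> y \in ball e I i.+1 u.
Proof.
move=> xb xy /=; rewrite inE; apply/orP; right; rewrite inE.
by apply/existsP; exists x; rewrite xb.
Qed.

Lemma ball_back (T : finType) (e : rel T) (I : {set T}) u i y :
  y \in ball e I i.+1 u -> y \notin ball e I i u ->
  exists2 x, x \in ball e I i u & phi_adj e I x y.
Proof.
rewrite /= inE => /orP [->//|]; rewrite inE => /existsP [x /andP [xb xy]] _.
by exists x.
Qed.

Lemma path_ball (T : finType) (e : rel T) (I : {set T}) u p :
  forall x k, x \in ball e I k u -> path (phi_adj e I) x p ->
  last x p \in ball e I (k + size p) u.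
Proof.
elim: p => [|y p IH] x k xb /=; first by rewrite addn0.
move=> /andP [xy pp]; rewrite addnS -addSn; apply: IH pp.
exact: ball_adj xb xy.
Qed.

Lemma layers (T : finType) (e : rel T) (I : {set T}) u m v :
  v \in ball e I m u -> (forall j, j < m -> v \notin ball e I j u) ->
  exists f : nat -> T,
    [/\ f m = v, forall i, i <= m -> f i \in ball e I i u,
        forall i j, i < j -> j <= m -> f j \notin ball e I i u
      & forall i, i < m -> phi_adj e I (f i) (f i.+1)].
Proof.
elim: m v => [|m IH] v vb vn.
  exists (fun _ => v); split=> //.
  - by move=> i; rewrite leqn0 => /eqP ->.
  - by move=> i j ij; rewrite leqn0 => /eqP jz; rewrite jz in ij.
have [x xb xv] := ball_back (vb) (vn m (ltnSn m)).
have xn : forall j, j < m -> x \notin ball e I j u.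
  move=> j jm; apply/negP => xj.
  by have := vn j.+1 jm; rewrite (ball_adj xj xv).
have [g [gm gb gn ga]] := IH x xb xn.
exists (fun i => if i == m.+1 then v else g i); split.
- by rewrite eqxx.
- move=> i; case: eqP => [-> _|/eqP ne im]; first exact: vb.
  apply: gb.
  by rewrite -ltnS ltn_neqAle ne im.
- move=> i j ij jm; have [jE|ne] := eqVneq j m.+1.
    by move: ij; rewrite jE; apply: vn.
  apply: gn => //.
  by rewrite -ltnS ltn_neqAle ne jm.
- move=> i; rewrite ltnS leq_eqVlt => /orP [/eqP ->|im].
    by rewrite eqxx (ltn_eqF (ltnSn m)) gm.
  have h1 : (i == m.+1) = false by apply/negbTE; rewrite neq_ltn ltnS ltnW.
  have h2 : (i.+1 == m.+1) = false by apply/negbTE; rewrite neq_ltn ltnS im.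
  by rewrite h1 h2; apply: ga.
Qed.

Lemma sum_lb_aux (g : nat -> nat) n :
  (forall i, i < n -> 1 <= g i) -> (forall i, 0 < i -> i < n -> 2 <= g i) ->
  n.*2 <= (\sum_(0 <= i < n) g i).+1.
Proof.
elim: n => [|n IH] h1 h2; first by rewrite big_geq.
rewrite big_nat_recr //=.
have IH' := IH (fun i im => h1 i (ltnW im)) (fun i i0 im => h2 i i0 (ltnW im)).
case: n IH IH' h1 h2 => [|n] _ IH' h1 h2.
  by rewrite big_geq //= add0n; have := h1 0 isT.
have := h2 n.+1 isT (ltnSn _).
rewrite doubleS; lia.
Qed.

Lemma sum_lb (g : nat -> nat) n :
  (forall i, i < n -> 1 <= g i) -> (forall i, 0 < i -> i.+1 < n -> 2 <= g i) ->
  n.*2 <= (\sum_(0 <= i < n) g i).+2.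
Proof.
case: n => [|n] h1 h2; first by rewrite big_geq.
rewrite big_nat_recr //=.
have := sum_lb_aux (n:=n) (g:=g) (fun i im => h1 i (ltnW im)) (fun i i0 im => h2 i i0 im).
have := h1 n (ltnSn _).
rewrite doubleS; lia.
Qed.

Lemma path_le_deg (T : finType) (e : rel T) (I : {set T}) (f : nat -> T) m :
  (forall i, i <= m -> f i \in I) ->
  (forall i j, i < j -> j <= m -> f i != f j) ->
  \sum_(0 <= i < m) sigma e (f i) (f i.+1) <= switch_deg e I.
Proof.
move=> fI fd.
have finj : forall i j, i <= m -> j <= m -> f i = f j -> i = j.
  move=> i j im jm fij; case: (ltngtP i j) => // ij.
    by have := fd i j ij jm; rewrite fij eqxx.
  by have := fd j i ij im; rewrite fij eqxx.
pose g (i : 'I_m) : T * T :=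
  if enum_rank (f i) < enum_rank (f i.+1) then (f i, f i.+1) else (f i.+1, f i).
pose F (p : T * T) := sigma e p.1 p.2.
have ginj : injective g.
  move=> i j; rewrite /g.
  have im := ltnW (ltn_ord i); have jm := ltnW (ltn_ord j).
  have im' := ltn_ord i; have jm' := ltn_ord j.
  case: ifP; case: ifP => _ _ [] h1 h2; apply: val_inj => /=.
  - exact: finj h1.
  - have := finj _ _ im (jm') h1; have := finj _ _ im' jm h2; lia.
  - have := finj _ _ im' jm h1; have := finj _ _ im jm' h2; lia.
  - exact: finj h2.
rewrite big_mkord.
have -> : \sum_(i < m) sigma e (f i) (f i.+1) = \sum_(i < m) F (g i).
  by apply: eq_bigr => i _; rewrite /F /g; case: ifP => _ //=; rewrite sigmaC.
rewrite -(big_imset F (in2W ginj)) /=.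
rewrite /switch_deg pair_big_dep /=.
rewrite big_mkcond [X in _ <= X]big_mkcond; apply: leq_sum => p _.
case: ifP => // /imsetP [i _ ->]; rewrite /F.
have iI := fI i (ltnW (ltn_ord i)); have iI' := fI i.+1 (ltn_ord i).
have ne : enum_rank (f i) != enum_rank (f i.+1).
  apply/negP => /eqP /enum_rank_inj h.
  by have := fd i i.+1 (ltnSn _) (ltn_ord i); rewrite h eqxx.
rewrite /g; case: ifP => [lt|ge] /=; first by rewrite iI iI' lt.
rewrite iI iI' /=; case: ltngtP ne ge => //.
by move=> /val_inj ->; rewrite eqxx.
Qed.

Lemma path_bound (T : finType) (e : rel T) (I : {set T}) (f : nat -> T) m :
  (forall i, i <= m -> f i \in I) ->
  (forall i j, i < j -> j <= m -> f i != f j) ->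
  (forall i, i < m -> phi_adj e I (f i) (f i.+1)) ->
  (forall i j, i.+1 < j -> j <= m -> ~~ phi_adj e I (f i) (f j)) ->
  m.*2 <= (switch_deg e I).+2.
Proof.
move=> fI fd fa fn.
have inc : forall x y, phi_adj e I x y ->
    ~~ (nbhd e x \subset nbhd e y) /\ ~~ (nbhd e y \subset nbhd e x).
  move=> x y /and4P [_ _ _]; rewrite lt0n sigma_eq0 negb_or => /andP [? ?].
  by split.
have cmp : forall i j, i < j -> j <= m -> ~~ phi_adj e I (f i) (f j) ->
    (nbhd e (f i) \subset nbhd e (f j)) || (nbhd e (f j) \subset nbhd e (f i)).
  move=> i j ij jm; rewrite -sigma_eq0 /phi_adj fI ?fI ?fd //=.
    by rewrite lt0n negbK.
  exact: leq_trans (ltnW ij) jm.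
have H1 := @path_le_deg T e I f m fI fd.
suff h : m.*2 <= (\sum_(0 <= i < m) sigma e (f i) (f i.+1)).+2.
  by apply: leq_trans h _; rewrite !ltnS.
apply: sum_lb => [i im|i i0 im].
  by have /and4P [_ _ _] := fa i im.
have := fa i (ltnW im); move=> /and4P [_ _ _ pos].
rewrite ltn_neqAle pos andbT; apply/negP => /eqP h1.
move/eqP: h1; rewrite sigmaE eq_sym muln_eq1 => /andP [/eqP c1 /eqP c2].
have ei : (i.-1).+1 = i by rewrite prednK.
have [i1 i2] : i.-1 < i /\ i < m by split; [rewrite prednK | lia].
have [nWX nXW] := inc _ _ (fa i.-1 (ltn_trans i1 i2)); rewrite ei in nWX nXW.
have [nXY nYX] := inc _ _ (fa i (ltnW im)).
have [nYZ nZY] := inc _ _ (fa i.+1 im).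
apply: (four_sets nWX nXW nXY nYX nYZ nZY _ _ _ c1 c2).
- apply: cmp; [lia | lia | apply: fn; lia].
- apply: cmp; [lia | lia | apply: fn; lia].
- apply: cmp; [lia | lia | apply: fn; lia].
Qed.

Lemma dist_bound (T : finType) (e : rel T) (I : {set T}) u v :
  u \in I -> connect (phi_adj e I) u v ->
  phi_dist e I u v <= uphalf (switch_deg e I + 1).
Proof.
move=> uI /connectP [p pp ->].
case: (shortenP pp) => p' pp' up' _.
have sz : size p' < #|T|.
  by have := max_card (mem (u :: p')); rewrite (card_uniqP up').
have vb0 : last u p' \in ball e I (size p') u.
  have h0 : u \in ball e I 0 u by rewrite /= set11.
  by have := path_ball h0 pp'; rewrite add0n.
move: vb0 sz; move: (last u p') (size p') => w n vbn sz.
rewrite /phi_dist.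
set s := iota 0 #|T|.+1.
set pr := fun k => w \in ball e I k u.
have hs : has pr s.
  by apply/hasP; exists n; first by rewrite mem_iota /= add0n ltnS ltnW.
have fm : find pr s < #|T|.+1.
  by have := hs; rewrite has_find /s size_iota.
set m := find pr s in fm *.
have vb : w \in ball e I m u.
  by have := nth_find 0 hs; rewrite /pr nth_iota.
have vn : forall j, j < m -> w \notin ball e I j u.
  move=> j jm; have := before_find 0 jm; rewrite /pr nth_iota ?add0n => [->//|].
  exact: ltn_trans jm fm.
have [f [fm' fb fnb fa]] := layers vb vn.
rewrite geq_uphalf_double addn1.
apply: (@path_bound T e I f m).
- move=> i; case: i => [_|i im].
    by have := fb 0 isT; rewrite /= inE => /eqP ->.
  by have /and4P [_ ->] := fa i im.
- move=> i j ij jm; apply/negP => /eqP h.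
  by have := fnb i j ij jm; rewrite -h fb // (ltnW (leq_trans ij jm)).
- exact: fa.
- move=> i j ij jm; apply/negP => a.
  by have := fnb i.+1 j ij jm; rewrite (ball_adj (fb i (ltnW (leq_trans (ltnW ij) jm))) a).
Qed.

Theorem theorem4p7 (T : finType) (e : rel T) (K I : {set T}) :
  split_graph e K I ->
  phi_connected e I ->
  phi_diameter e I <= uphalf (switch_deg e I + 1).
Proof.
move=> _ hc; rewrite /phi_diameter.
apply/bigmax_leqP => u uI; apply/bigmax_leqP => v vI.
exact: dist_bound uI (hc u v uI vI).
Qed.
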